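(* There is no flag complex whose $h$-polynomial $h_0+h_1t+\cdots+h_dt^d$ equals $1+3t+3t^2$; that is, no flag complex of dimension $d-1\ge 1$ has $h$-vector $(1,3,3,0,\ldots,0)$. In particular, the face vector $(1,3,3)$ of the boundary of a triangle is not the $h$-vector of any flag complex.
   Context: A flag complex is the independence complex $\mathrm{Ind}(G)$ of a graph $G$ (faces are independent sets). For a $(d-1)$-dimensional complex with face vector $(f_{-1},\ldots,f_{d-1})$ ($f_i$ = number of faces with $i+1$ elements), the $h$-vector is $(h_0,\ldots,h_d)$ with $h_j=\sum_{i=0}^{j}(-1)^{j-i}\binom{d-i}{j-i}f_{i-1}$. *)

(* Defs.v *)
From HB Require Import structures.
From mathcomp Require Import all_boot all_order all_algebra.
Set Implicit Arguments. Unset Strict Implicit. Unset Printing Implicit Defensive.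
Import Order.TTheory GRing.Theory Num.Theory.

Definition simple_graph (T : finType) (e : rel T) : Prop :=
  symmetric e /\ irreflexive e.

(* Independent sets of G = faces of the flag complex Ind(G). *)
Definition independent (T : finType) (e : rel T) (S : {set T}) : bool :=
  [forall x in S, forall y in S, ~~ e x y].

(* Number of faces with exactly i elements (this is f_{i-1} in the paper). *)
Definition nfaces (T : finType) (e : rel T) (i : nat) : nat :=
  #|[set S : {set T} | independent e S & #|S| == i]|.

(* d = max size of a face, so Ind(G) has dimension d - 1. *)
Definition cdim (T : finType) (e : rel T) : nat :=
  \max_(S : {set T} | independent e S) #|S|.

Definition hvec (T : finType) (e : rel T) (j : nat) : int :=
  (\sum_(i < j.+1)
     (-1) ^+ (j - i) * ('C(cdim e - i, j - i) * nfaces e i)%:Z)%R.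

Definition hpoly (T : finType) (e : rel T) : {poly int} :=
  \poly_(j < (cdim e).+1) hvec e j.

(* Main.v *)
Require Import Defs.
From HB Require Import structures.
From mathcomp Require Import all_boot all_order all_algebra.
From Stdlib Require Import Lia.
Import GRing.Theory.
Set Implicit Arguments. Unset Strict Implicit.

Definition dep (T : finType) (e : rel T) (i : nat) : {set {set T}} :=
  [set S : {set T} | ~~ independent e S & #|S| == i].

Lemma nf_split (T : finType) (e : rel T) i :
  nfaces e i + #|dep e i| = 'C(#|T|, i).
Proof.
rewrite -card_draws -(cardsID [set S : {set T} | independent e S]).
congr (_ + _); apply: eq_card => S; rewrite !inE //; exact: andbC.
Qed.

Lemma dep0 (T : finType) (e : rel T) : #|dep e 0| = 0.
Proof.
apply/eqP; rewrite cards_eq0; apply/eqP/setP => S; rewrite !inE.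
apply/negbTE; apply/andP => [[Hn /eqP/cards0_eq HS]]; move: Hn; rewrite HS.
move/negP; apply; apply/forall_inP => x; by rewrite inE.
Qed.

Lemma dep1 (T : finType) (e : rel T) : irreflexive e -> #|dep e 1| = 0.
Proof.
move=> irr; apply/eqP; rewrite cards_eq0; apply/eqP/setP => S; rewrite !inE.
apply/negbTE; apply/andP => [[Hn /cards1P [x HS]]]; move: Hn; rewrite HS.
move/negP; apply; apply/forall_inP => y /set1P ->; apply/forall_inP => z /set1P ->.
by rewrite irr.
Qed.

Lemma card_bigcup_le (I X : finType) (A : {set I}) (F : I -> {set X}) :
  #|\bigcup_(i in A) F i| <= \sum_(i in A) #|F i|.
Proof.
apply: (big_rec2 (fun (s : {set X}) (m : nat) => #|s| <= m)) => [|i s m _ Hs].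
  by rewrite cards0.
rewrite cardsU; apply: leq_trans (leq_subr _ _) _; exact: leq_add.
Qed.

Lemma dep32 (T : finType) (e : rel T) : irreflexive e ->
  #|dep e 3| <= #|dep e 2| * (#|T| - 2).
Proof.
move=> irr.
pose F (P : {set T}) := [set z |: P | z in ~: P].
have sub : dep e 3 \subset \bigcup_(P in dep e 2) F P.
  apply/subsetP => S; rewrite inE => /andP [Hn /eqP HS3].
  move: Hn; rewrite negb_forall_in => /exists_inP [x xS].
  rewrite negb_forall_in => /exists_inP [y yS]; rewrite negbK => exy.
  have xy : x != y by apply: contraTneq exy => ->; rewrite irr.
  have P2 : [set x; y] \in dep e 2.
    rewrite inE cards2 xy andbT; apply/negP => /forall_inP /(_ x (set21 _ _)).
    by move/forall_inP /(_ y (set22 _ _)); rewrite exy.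
  have PS : [set x; y] \subset S.
    by apply/subsetP => z /set2P [] ->.
  have : ~~ (S \subset [set x; y]).
    apply/negP => /subset_leq_card; rewrite HS3 cards2 xy //.
  case/subsetPn => z zS zP.
  apply/bigcupP; exists [set x; y] => //; apply/imsetP; exists z.
    by rewrite inE.
  apply/eqP; rewrite eq_sym eqEcard HS3 cardsU1 zP cards2 xy andbT.
  by apply/subsetP => w /setU1P [-> // | /(subsetP PS)].
apply: leq_trans (subset_leq_card sub) _.
apply: leq_trans (card_bigcup_le _ _) _.
rewrite -sum_nat_const; apply: leq_sum => P; rewrite inE => /andP [_ /eqP P2].
apply: leq_trans (leq_imset_card _ _) _.
by rewrite -(cardsC P) P2 addKn.
Qed.

Lemma f3_0 (T : finType) (e : rel T) : cdim e < 3 -> nfaces e 3 = 0.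
Proof.
move=> Hd; apply/eqP; rewrite cards_eq0; apply/eqP/setP => S; rewrite !inE.
apply/negbTE; apply/andP => [[Hi /eqP HS]].
have := @leq_bigmax_cond _ (fun S : {set T} => independent e S) (fun S : {set T} => #|S|) S Hi.
rewrite -/(cdim e) HS => H; move: (leq_ltn_trans H Hd); by rewrite ltnn.
Qed.
Lemma B2 m : 'C(m.+1, 2) * 2 = m.+1 * m.
Proof. have H := bin_ffact m.+1 2; rewrite ffactSS ffactn1 in H; exact H. Qed.
Lemma B3 m : 'C(m.+2, 3) * 6 = m.+2 * m.+1 * m.
Proof. have H := bin_ffact m.+2 3; rewrite !ffactSS ffactn1 mulnA in H; exact H. Qed.

Local Open Scope ring_scope.
Lemma L3 (a b c d : nat) : - (a%:Z) + b%:Z - c%:Z + d%:Z = 0 -> (b + d = a + c)%N.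
Proof.
rewrite addrAC => /eqP; rewrite subr_eq add0r -addrA addrC subr_eq.
by rewrite -!PoszD eqz_nat => /eqP ->; rewrite addnC.
Qed.
Lemma L2 (a b c : nat) : (a%:Z) - b%:Z + c%:Z = 3 -> (a + c = 3 + b)%N.
Proof.
rewrite addrAC => /eqP; rewrite subr_eq.
have -> : (3 : int) = Posz 3 by [].
by rewrite -!PoszD eqz_nat => /eqP.
Qed.
Lemma L1 (a b : nat) : - (a%:Z) + b%:Z = 3 -> (b = 3 + a)%N.
Proof.
rewrite addrC => /eqP; rewrite subr_eq.
have -> : (3 : int) = Posz 3 by [].
by rewrite -!PoszD eqz_nat => /eqP.
Qed.
Theorem mainTheorem8 (T : finType) (e : rel T) (hG : simple_graph e) :
  hpoly e <> 1 + 3%:R *: 'X + 3%:R *: 'X^2.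
Proof.
move=> H.
have irr := hG.2.
have Hc j : (hpoly e)`_j = (1 + 3%:R *: 'X + 3%:R *: 'X^2 : {poly int})`_j by rewrite H.
have f0 : nfaces e 0 = 1%N by have := nf_split e 0; rewrite dep0 addn0 bin0.
have f1 : nfaces e 1 = #|T| by have := nf_split e 1; rewrite dep1 // addn0 bin1.
have s2 := nf_split e 2; have s3 := nf_split e 3; have b := dep32 irr.
have C1 := Hc 1%N; have C2 := Hc 2%N; have C3 := Hc 3%N.
rewrite /hpoly !coef_poly !coefD !coef1 !coefZ !coefX !coefXn /= in C1 C2 C3.
rewrite !mulr0 !mulr1 !addr0 !add0r in C1 C2 C3.
rewrite /hvec in C1 C2 C3.
case Hd: (cdim e) C1 C2 C3 => [|[|[|k]]] C1 C2 C3 /=.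
- by [].
- by [].
- move: C1; rewrite !big_ord_recr big_ord0 /= !subnn !subn0 /= !expr0 ?mul1r add0r => /L1 E1.
  move: C2; rewrite !big_ord_recr big_ord0 /= !subnn !subn0 /= !expr0 ?mul1r add0r => /L2 E2.
  have F3 : nfaces e 3 = 0%N by apply: f3_0; rewrite Hd.
  rewrite f0 f1 ?bin0 ?bin1 ?binn ?muln1 ?mul1n in E1 E2.
  rewrite E1 F3 in s2 s3 b; rewrite E1 in E2.
  move: s2 s3 b E2; rewrite (_ : 'C(3+2,2) = 10%N) // (_ : 'C(3+2,3) = 10%N) //.
  move: (nfaces e 2) (#|dep e 2|) (#|dep e 3|) => a g h /= H1 H2 /leP H3 H4.
  unfold addn, muln, subn in *; lia.
- move: C1; rewrite !big_ord_recr big_ord0 /= !subnn !subn0 /= !expr0 ?mul1r add0r => /L1 E1.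
  move: C2; rewrite !big_ord_recr big_ord0 /= !subnn !subn0 /= !expr0 ?mul1r add0r => /L2 E2.
  move: C3; rewrite !big_ord_recr big_ord0 /= !subnn !subn0 /= !expr0 ?mul1r add0r => /L3 E3.
  rewrite f0 f1 ?bin0 ?bin1 ?binn ?muln1 ?mul1n in E1 E2 E3.
  rewrite !subSS !subn0 ?bin0 ?bin1 in E1 E2 E3.
  have n6 : #|T| = k.+4.+2 by rewrite E1 add3n.
  rewrite n6 in E2 E3 s2 s3 b.
  have X1 := B2 k.+4.+1; have X2 := B3 k.+4; have X3 := B2 k.+1; have X4 := B2 k.+2;
  have X5 := B3 k.+1.
  move: X1 X2 X3 X4 X5 E2 E3 s2 s3 b.
  move: ('C(k.+4.+2, 2)) ('C(k.+4.+2, 3)) ('C(k.+2, 2)) ('C(k.+3, 2)) ('C(k.+3, 3)).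
  move: (nfaces e 2) (nfaces e 3) (#|dep e 2|) (#|dep e 3|).
  move=> f2 f3 g2 g3 W Z X V Y X1 X2 X3 X4 X5 E2 E3 s2 s3 /leP b.
  unfold addn, muln, subn in *.
  assert (g2 = 3)%coq_nat by nia. subst g2.
  assert (2*f2 = k*k+11*k+24)%coq_nat by nia.
  nia.
Qed.
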